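(* Let $\mathcal{T}$ be an almost linear iteration tree with tree order $T$, and let $\lambda\le\mathrm{lh}(\mathcal{T})$ be a limit ordinal (or $\lambda=\mathrm{OR}$). Then $\mathcal{T}\restriction\lambda$ has a unique cofinal branch $b$, and if $\lambda<\mathrm{lh}(\mathcal{T})$ then $b=[0,\lambda)_T$.
   Context: Iteration trees are as in inner model theory (Mitchell–Steel, ''Fine structure and iteration trees''): $T$ is the tree order on $\mathrm{lh}(\mathcal{T})$, $[0,\alpha)_T$ denotes the set of $T$-predecessors of $\alpha$, and $T\text{-pred}(i+1)$ is the immediate $T$-predecessor of $i+1$. An iteration tree $\mathcal{T}$ is almost linear if (a) for all $i+1<\mathrm{lh}(\mathcal{T})$ we have $T\text{-pred}(i+1)\in[0,i]_T$, and (b) every $i<\mathrm{lh}(\mathcal{T})$ has only finitely many immediate $T$-successors. A cofinal branch of $\mathcal{T}\restriction\lambda$ is a set $b\subseteq\lambda$ which is linearly ordered and downward closed under $T$ and unbounded in $\lambda$. *)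

(* Defs.v *)
(* Ordinals are modelled by an arbitrary well-ordered type
   (O, lt); initial segments of O (downward closed predicates) play the role
   of ordinals <= the order type of O, with the whole of O playing OR. *)
From Stdlib Require Import List.
Set Implicit Arguments.

Section Ord.
Variable O : Type.
Variable lt : O -> O -> Prop.

Definition le (x y : O) : Prop := lt x y \/ x = y.

Definition is_wellorder : Prop :=
  (forall x, ~ lt x x) /\
  (forall x y z, lt x y -> lt y z -> lt x z) /\
  (forall x y, lt x y \/ x = y \/ lt y x) /\
  well_founded lt.

Definition is_min (z : O) : Prop := forall x, le z x.
Definition is_succ (a b : O) : Prop := lt a b /\ forall x, lt a x -> le b x.
Definition is_limit (l : O) : Prop :=
  (exists x, lt x l) /\ forall x, lt x l -> exists y, lt x y /\ lt y l.

Definition downward_closed (S : O -> Prop) : Prop :=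
  forall x y, lt x y -> S y -> S x.
(* a limit initial segment: nonempty, with no largest element;
   these are exactly the limit ordinals and OR (= all of O) *)
Definition limit_segment (L : O -> Prop) : Prop :=
  downward_closed L /\ (exists x, L x) /\
  forall x, L x -> exists y, L y /\ lt x y.

Variable T : O -> O -> Prop.   (* tree order: T x y means x <_T y *)

Definition Tle (x y : O) : Prop := T x y \/ x = y.
Definition Tpred (p j : O) : Prop := T p j /\ forall x, T x j -> Tle x p.

(* T is the tree order of an iteration tree of length lh
   (Mitchell-Steel, Fine structure and iteration trees, Def. 5.1) *)
Definition iteration_tree_order (lh : O -> Prop) : Prop :=
  downward_closed lh /\
  (forall a b, T a b -> lh a /\ lh b) /\
  (forall a b, T a b -> lt a b) /\
  (forall a b c, T a b -> T b c -> T a c) /\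
  (forall a c b, T a b -> T c b -> a = c \/ T a c \/ T c a) /\
  (forall z b, is_min z -> lh b -> b <> z -> T z b) /\
  (forall a b, is_succ a b -> lh b -> exists p, Tpred p b) /\
  (* for limit l < lh, [0,l)_T is club in l *)
  (forall l, is_limit l -> lh l ->
     (forall x, lt x l -> exists y, lt x y /\ T y l) /\
     (forall g, lt g l -> is_limit g ->
        (forall x, lt x g -> exists y, lt x y /\ lt y g /\ T y l) -> T g l)).

Definition almost_linear (lh : O -> Prop) : Prop :=
  (forall i j p, is_succ i j -> lh j -> Tpred p j -> Tle p i) /\
  (forall i, lh i -> exists s : list O, forall j, Tpred i j -> In j s).

Definition cofinal_branch (L : O -> Prop) (b : O -> Prop) : Prop :=
  (forall x, b x -> L x) /\
  (forall x y, b x -> b y -> x = y \/ T x y \/ T y x) /\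
  (forall x y, b y -> T x y -> b x) /\
  (forall x, L x -> exists y, b y /\ le x y).

End Ord.

(* Main.v *)
Require Import Defs.
From Stdlib Require Import List Classical.

Theorem lemma2p2 (O : Type) (lt : O -> O -> Prop) (Hwo : is_wellorder lt)
  (T : O -> O -> Prop) (lh : O -> Prop)
  (HT : iteration_tree_order lt T lh) (Hal : almost_linear lt T lh)
  (L : O -> Prop) (HL : limit_segment lt L) (HLlh : forall x, L x -> lh x) :
  (exists b, cofinal_branch lt T L b /\
     forall c, cofinal_branch lt T L c -> forall x, c x <-> b x) /\
  (forall l, lh l -> (forall x, L x <-> lt x l) ->
     forall b, cofinal_branch lt T L b -> forall x, b x <-> T x l).
Proof.
  destruct Hwo as [Hirr [Htr [Htri Hwf]]].
  destruct HT as [Hlhdc [HTlh [HTlt [HTtr [HTlin [HTroot [HTsucc HTlim]]]]]]].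
  destruct Hal as [Hal1 Hal2].
  destruct HL as [HLdc [[x0 Hx0] HLnm]].
  assert (Hle_lt : forall x y z, le lt x y -> lt y z -> lt x z).
  { intros x y z [H|H] H'; [eauto|subst; auto]. }
  assert (Hlt_le : forall x y z, lt x y -> le lt y z -> lt x z).
  { intros x y z H [H'|H']; [eauto|subst; auto]. }
  assert (Hle_tr : forall x y z, le lt x y -> le lt y z -> le lt x z).
  { intros x y z [H|H] H'; [left; eauto|subst; auto]. }
  assert (Hlt_nle : forall x y, lt x y -> ~ le lt y x).
  { intros x y H H'. apply (Hirr x). eauto. }
  assert (Hnlt_le : forall x y, ~ lt x y -> le lt y x).
  { intros x y H. destruct (Htri x y) as [?|[?|?]]; [tauto|right; auto|left; auto]. }
  assert (Tle_tr : forall x y z, Tle T x y -> Tle T y z -> Tle T x z).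
  { intros x y z [H|H] [H'|H']; subst; unfold Tle; eauto. }
  assert (Tle_le : forall x y, Tle T x y -> le lt x y).
  { intros x y [H|H]; [left; auto|right; auto]. }
  assert (Hmin : forall (P : O -> Prop) x, P x -> exists m, P m /\ forall y, P y -> ~ lt y m).
  { intros P x Px. apply NNPP; intro Hn.
    assert (forall y, ~ P y). { intro y. induction y as [y IH] using (well_founded_ind Hwf).
      intro Py. apply Hn. exists y. split; auto. intros w Pw Hw. exact (IH w Hw Pw). }
    exact (H x Px). }
  assert (classify : forall j, is_min lt j \/ (exists a, is_succ lt a j) \/ is_limit lt j).
  { intro j. destruct (classic (exists x, lt x j)) as [[x Hx]|Hn].
    - destruct (classic (forall x, lt x j -> exists y, lt x y /\ lt y j)) as [H|H].
      + right; right. split; eauto.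
      + apply not_all_ex_not in H. destruct H as [a Ha].
        right; left. exists a. assert (lt a j) by tauto. split; auto.
        intros z Hz. apply Hnlt_le. intro Hzj. apply Ha. intros _. eauto.
    - left. intro x. apply Hnlt_le. intro H. apply Hn; eauto. }
  assert (LemA : forall j, lh j -> forall x i, le lt x i -> lt i j -> Tle T x j -> Tle T x i).
  { intro j. induction j as [j IH] using (well_founded_ind Hwf).
    intros Hj x i Hxi Hij Hxj.
    destruct Hxj as [Hxj|Hxj]; [|exfalso; subst; apply (Hirr i); eapply Hlt_le; [exact Hij|exact Hxi]].
    destruct (classify j) as [Hm|[[a Ha]|Hlim]].
    - exfalso. eapply Hlt_nle; eauto.
    - destruct (HTsucc a j Ha Hj) as [p Hp].
      assert (Hia : le lt i a).
      { apply Hnlt_le. intro Hai. destruct Ha as [_ Ha]. exact (Hlt_nle _ _ Hij (Ha i Hai)). }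
      assert (Hxa : Tle T x a).
      { eapply Tle_tr. apply (proj2 Hp). auto. eapply Hal1; eauto. }
      destruct Hia as [Hia|Hia]; [|subst; auto].
      apply (IH a (proj1 Ha)); eauto. apply (Hlhdc a j (proj1 Ha) Hj).
    - destruct (proj1 (HTlim j Hlim Hj) i Hij) as [y [Hiy Hyj]].
      destruct (HTlin x y j Hxj Hyj) as [E|[E|E]].
      + subst. exfalso. eapply Hlt_nle; eauto.
      + apply (IH y (HTlt _ _ Hyj)); eauto. left; auto.
      + exfalso. apply (Hirr y). eapply Hlt_le. apply HTlt; eauto. eapply Hle_tr; eauto. left; auto. }

  set (b := fun x => L x /\ forall j, L j -> le lt x j -> Tle T x j).
  assert (Hbc : forall c, cofinal_branch lt T L c -> forall x, c x <-> b x).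
  { intros c [Hc1 [Hc2 [Hc3 Hc4]]] x. split.
    - intro Hx. split; auto. intros j Hj Hxj.
      destruct (Hc4 j Hj) as [y [Hy Hjy]].
      assert (Hxy : Tle T x y).
      { destruct (Hc2 x y Hx Hy) as [E|[E|E]]; [right; auto|left; auto|].
        exfalso. eapply Hlt_nle. apply HTlt; exact E. eapply Hle_tr; eauto. }
      destruct Hjy as [Hjy|Hjy]; [|subst; auto].
      eapply (LemA y); eauto.
    - intros [Hx Hxb]. destruct (Hc4 x Hx) as [y [Hy Hxy]].
      destruct (Hxb y (Hc1 y Hy) Hxy) as [E|E]; [eauto|subst; auto]. }
  assert (Hz : exists z, b z).
  { destruct (Hmin (fun _ => True) x0 I) as [z [_ Hz]].
    assert (Hzm : is_min lt z) by (intro w; apply Hnlt_le; apply Hz; auto).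
    exists z. split.
    - destruct (Hzm x0) as [E|E]; [eauto|subst; auto].
    - intros j Hj _. destruct (classic (j = z)) as [E|E]; [right; auto|left; auto]. }
  assert (Hbbr : cofinal_branch lt T L b).
  { split; [intros x [Hx _]; auto|].
    split.
    { intros x y [Hx Hxb] [Hy Hyb].
      destruct (Htri x y) as [E|[E|E]]; [|left; auto|].
      - destruct (Hxb y Hy (or_introl E)) as [F|F]; auto.
      - destruct (Hyb x Hx (or_introl E)) as [F|F]; auto. }
    split.
    { intros x y [Hy Hyb] Hxy. assert (Hx : L x) by (eapply HLdc; [apply HTlt; exact Hxy| exact Hy]).
      split; auto. intros j Hj Hxj.
      destruct (Htri j y) as [E|[E|E]].
      - eapply (LemA y); eauto. left; auto.
      - subst; left; auto.
      - eapply Tle_tr. left; exact Hxy. apply Hyb; auto. left; auto. }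
    intros x Hx. apply NNPP; intro Hno.
    assert (Hub : forall y, b y -> lt y x).
    { intros y Hy. apply NNPP. intro H. apply Hno. exists y. split; auto. }
    destruct (classic (exists a, b a /\ forall y, b y -> le lt y a)) as [[a [Ha Hamax]]|Hnomax].
    - destruct (Hal2 a (HLlh a (proj1 Ha))) as [s Hs].
      assert (HJ : exists J, L J /\ lt a J /\ forall c, In c s -> L c -> ~ b c ->
                 exists jc, L jc /\ le lt c jc /\ ~ Tle T c jc /\ le lt jc J).
      { clear Hs. induction s as [|c s IHs].
        - destruct (HLnm a (proj1 Ha)) as [J [HJ HaJ]]. exists J; repeat split; auto.
          intros c [] .
        - destruct IHs as [J [HJ [HaJ HJs]]].
          destruct (classic (L c /\ ~ b c)) as [[Hc Hnb]|Hcb].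
          + assert (Hjc : exists jc, L jc /\ le lt c jc /\ ~ Tle T c jc).
            { apply NNPP; intro H. apply Hnb. split; auto. intros j Hj Hcj.
              apply NNPP; intro H'. apply H. exists j; auto. }
            destruct Hjc as [jc [Hjc1 [Hjc2 Hjc3]]].
            destruct (classic (lt J jc)) as [HJjc|HJjc].
            * exists jc. split; auto. split; [eauto|].
              intros c' [E|E] Hc' Hnb'.
              { subst c'. exists jc; repeat split; auto; right; auto. }
              { destruct (HJs c' E Hc' Hnb') as [j' [? [? [? ?]]]].
                exists j'; repeat split; auto; eapply Hle_tr; eauto; left; auto. }
            * exists J. split; auto. split; auto.
              intros c' [E|E] Hc' Hnb'.
              { subst c'. exists jc; repeat split; auto. }
              { auto. }
          + exists J. split; auto. split; auto.
            intros c' [E|E] Hc' Hnb'.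
            { subst c'. tauto. }
            { auto. } }
      destruct HJ as [J [HJ [HaJ HJs]]].
      assert (HaTJ : T a J).
      { destruct (proj2 Ha J HJ (or_introl HaJ)) as [E|E]; auto. subst; exfalso; eapply Hirr; eauto. }
      destruct (Hmin (fun c => T a c /\ Tle T c J) J (conj HaTJ (or_intror eq_refl)))
        as [c [[Hac HcJ] Hcmin]].
      assert (Hpc : Tpred T a c).
      { split; auto. intros w Hw.
        assert (HwJ : T w J) by (destruct HcJ as [E|E]; [eauto|subst; auto]).
        destruct (HTlin w a J HwJ HaTJ) as [E|[E|E]]; [right; auto|left; auto|].
        exfalso. apply (Hcmin w); [split; auto; left; auto|apply HTlt; auto]. }
      assert (Hcs : In c s) by auto.
      assert (HLc : L c) by (destruct HcJ as [E|E]; [eapply HLdc; [apply HTlt; exact E|exact HJ]|subst; auto]).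
      assert (Hnbc : ~ b c).
      { intro Hbc'. eapply Hlt_nle. apply HTlt; exact Hac. apply Hamax; auto. }
      destruct (HJs c Hcs HLc Hnbc) as [jc [Hjc1 [Hjc2 [Hjc3 Hjc4]]]].
      apply Hjc3. destruct Hjc4 as [E|E]; [|subst; auto].
      eapply (LemA J); eauto.
    - assert (Hnm : forall a, b a -> exists y, b y /\ lt a y).
      { intros a Ha. apply NNPP; intro H. apply Hnomax. exists a. split; auto.
        intros y Hy. apply Hnlt_le. intro E. apply H. eauto. }
      set (U := fun z => forall y, b y -> lt y z).
      destruct (Hmin U x Hub) as [g [HUg Hgmin]].
      assert (Hgx : le lt g x) by (apply Hnlt_le; intro E; exact (Hgmin x Hub E)).
      assert (HLg : L g) by (destruct Hgx as [E|E]; [eauto|subst; auto]).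
      assert (Hcof : forall w, lt w g -> exists y, b y /\ lt w y /\ lt y g).
      { intros w Hw. assert (~ U w) by (intro E; exact (Hgmin w E Hw)).
        apply NNPP; intro H'. apply H. intros y Hy.
        destruct (Hnm y Hy) as [y' [Hy' Hyy']].
        apply NNPP; intro Hyw. apply H'. exists y'. split; auto. split; auto.
        eapply Hle_lt. apply Hnlt_le; exact Hyw. exact Hyy'. }
      assert (Hglim : is_limit lt g).
      { split.
        - destruct Hz as [z Hz]. exists z. auto.
        - intros w Hw. destruct (Hcof w Hw) as [y [? [? ?]]]. eauto. }
      assert (P : forall j, lh j -> le lt g j -> (forall y, b y -> T y j) -> Tle T g j).
      { intro j. induction j as [j IH] using (well_founded_ind Hwf).
        intros Hj Hgj Hbj. destruct Hgj as [Hgj|Hgj]; [|right; auto].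
        destruct (classify j) as [Hm|[[a Ha]|Hlim]].
        - exfalso. eapply Hlt_nle; eauto.
        - destruct (HTsucc a j Ha Hj) as [p [Hpj Hp]].
          assert (HUp : U p).
          { intros y Hy. destruct (Hnm y Hy) as [y' [Hy' Hyy']].
            eapply Hlt_le. exact Hyy'. apply Tle_le. apply Hp. auto. }
          assert (Hgp : le lt g p) by (apply Hnlt_le; intro E; exact (Hgmin p HUp E)).
          assert (Hbp : forall y, b y -> T y p).
          { intros y Hy. destruct (Hp y (Hbj y Hy)) as [E|E]; auto.
            subst. exfalso. exact (Hirr p (HUp p Hy)). }
          eapply Tle_tr. apply (IH p (HTlt _ _ Hpj) (proj1 (HTlh _ _ Hpj)) Hgp Hbp). left; auto.
        - left. apply (proj2 (HTlim j Hlim Hj) g Hgj Hglim).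
          intros w Hw. destruct (Hcof w Hw) as [y [? [? ?]]]. eauto. }
      assert (Hbg : b g).
      { split; auto. intros j Hj Hgj. apply P; auto.
        intros y Hy. destruct (proj2 Hy j Hj (or_introl (Hlt_le _ _ _ (HUg y Hy) Hgj))) as [E|E];
          [auto|subst; exfalso; exact (Hirr j (Hlt_le _ _ _ (HUg j Hy) Hgj))]. }
      exact (Hirr g (HUg g Hbg)). }
  split.
  - exists b. split; auto.
  - intros l Hl HLl c Hc x. rewrite (Hbc c Hc). split.
    + intros [Hx Hxb]. assert (Hxl : lt x l) by (apply HLl; auto).
      assert (Hlim : is_limit lt l).
      { split. exists x0; apply HLl; auto.
        intros w Hw. destruct (HLnm w (proj2 (HLl w) Hw)) as [y [Hy Hwy]].
        exists y; split; auto; apply HLl; auto. }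
      destruct (proj1 (HTlim l Hlim Hl) x Hxl) as [y [Hxy Hyl]].
      destruct (Hxb y (proj2 (HLl y) (HTlt _ _ Hyl)) (or_introl Hxy)) as [E|E]; [eauto|subst; auto].
    + intro Hxl. assert (Hx : L x) by (apply HLl; apply HTlt; auto).
      split; auto. intros j Hj Hxj. eapply (LemA l); eauto.
      apply HLl; auto. left; auto.
Qed.
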